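(* Let $n\ge4$ and consider $Sp(2n,\mathbb{C})$ with the root data described in the context. There exist no weights $\mu_0,\lambda_0$ with $\mu_0+\lambda_0=\rho_{\mathrm{nc}}-\rho_{\mathrm c}$ satisfying simultaneously: (a) $(\mu_0,\alpha)\ge0$ and $(\lambda_0,\alpha)\ge0$ for all $\alpha\in\Delta_+^{\mathrm c}$; and (b) for every $\beta\in\Delta_+^{\mathrm{nc},1}$ there is $\alpha_\beta\in\Delta_+^{\mathrm c}$ with $(\mu_0-\beta,\alpha_\beta)<0$, and for every $\gamma\in\Delta_+^{\mathrm{nc},2}$ there is $\alpha_\gamma\in\Delta_+^{\mathrm c}$ with $(\lambda_0-\gamma,\alpha_\gamma)<0$.
   Context: For $Sp(2n,\mathbb{C})$ with compact Cartan subgroup $T\cong U(1)^n$ of $Sp(2n,\mathbb{R})$, weights are integral combinations $\sum_{i=1}^n a_ie_i^*$ ($a_i\in\mathbb Z$) with inner product $(e_i^*,e_j^* )=\delta_{ij}$. Consider the positive system (defining the non-classical period domain for weight $2n-1$ Hodge structures with all Hodge numbers $1$) $\Delta_+=\Delta_+^{\mathrm c}\cup\Delta_+^{\mathrm{nc},1}\cup\Delta_+^{\mathrm{nc},2}$ with $\Delta_+^{\mathrm c}=\{(-1)^{i-1}(e_i^*-e_j^* ):1\le i<j\le n\}$, $\Delta_+^{\mathrm{nc},1}=\{e_i^*+e_j^*:1\le i\le j\le n,\ i\text{ odd}\}$, $\Delta_+^{\mathrm{nc},2}=\{-e_i^*-e_j^*:1\le i\le j\le n,\ i\text{ even}\}$,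 and $\Delta_+^{\mathrm{nc}}=\{(-1)^{i-1}(e_i^*+e_j^* ):1\le i\le j\le n\}=\Delta_+^{\mathrm{nc},1}\cup\Delta_+^{\mathrm{nc},2}$. $\rho_{\mathrm c}$ and $\rho_{\mathrm{nc}}$ are half the sums of the roots in $\Delta_+^{\mathrm c}$ and $\Delta_+^{\mathrm{nc}}$. *)

(* Defs.v *)
From HB Require Import structures.
From mathcomp Require Import all_boot all_order all_algebra.
Set Implicit Arguments. Unset Strict Implicit. Unset Printing Implicit Defensive.
Import Order.TTheory GRing.Theory Num.Theory.
Local Open Scope ring_scope.

(* Weights of Sp(2n,C) live in the lattice sum_i Z e_i^star; we embed them in
   rational row vectors 'rV[rat]_n (coordinates w.r.t. e_1^star,...,e_n^star),
   since rho_c and rho_nc are half-sums. Indices are 0-based: the paper's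
   index i (1-based) is our i : 'I_n with value i-1, so (-1)^(i-1) becomes
   (-1)^(val i). *)

Definition ev (n : nat) (i : 'I_n) : 'rV[rat]_n := delta_mx 0 i.

Definition sgn (n : nat) (i : 'I_n) : rat := (-1) ^+ (val i).

Definition ip (n : nat) (a b : 'rV[rat]_n) : rat := \sum_(k < n) a 0 k * b 0 k.

Definition Dc (n : nat) : seq 'rV[rat]_n :=
  [seq sgn i *: (ev i - ev j) | i <- enum 'I_n, j <- [seq j <- enum 'I_n | (val i < val j)%N]].

(* Delta_+^{nc,1} = { e_i + e_j : i <= j, i odd (1-based) } *)
Definition Dnc1 (n : nat) : seq 'rV[rat]_n :=
  [seq ev i + ev j | i <- [seq i <- enum 'I_n | ~~ odd (val i)],
                     j <- [seq j <- enum 'I_n | (val i <= val j)%N]].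

(* Delta_+^{nc,2} = { -e_i - e_j : i <= j, i even (1-based) } *)
Definition Dnc2 (n : nat) : seq 'rV[rat]_n :=
  [seq - ev i - ev j | i <- [seq i <- enum 'I_n | odd (val i)],
                       j <- [seq j <- enum 'I_n | (val i <= val j)%N]].

Definition Dnc (n : nat) : seq 'rV[rat]_n :=
  [seq sgn i *: (ev i + ev j) | i <- enum 'I_n, j <- [seq j <- enum 'I_n | (val i <= val j)%N]].

Definition rho_c (n : nat) : 'rV[rat]_n := 2^-1 *: \sum_(a <- Dc n) a.
Definition rho_nc (n : nat) : 'rV[rat]_n := 2^-1 *: \sum_(a <- Dnc n) a.

Definition wt (n : nat) (a : 'I_n -> int) : 'rV[rat]_n := \row_k (a k)%:~R.

(* Main.v *)
Require Import Defs.
From HB Require Import structures.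
From mathcomp Require Import all_boot all_order all_algebra.
From mathcomp Require Import zify ring lra.
Import Order.TTheory GRing.Theory Num.Theory.
Local Open Scope ring_scope.

Set Implicit Arguments. Unset Strict Implicit.
Section H.
Variable n : nat.
Implicit Types x y a b : 'rV[rat]_n.

Lemma ipD x a b : ip x (a + b) = ip x a + ip x b.
Proof. by rewrite /ip -big_split; apply: eq_bigr => k _; rewrite mxE mulrDr. Qed.
Lemma ipN x a : ip x (- a) = - ip x a.
Proof. by rewrite /ip -sumrN; apply: eq_bigr => k _; rewrite mxE mulrN. Qed.
Lemma ipZ x c a : ip x (c *: a) = c * ip x a.
Proof. by rewrite /ip mulr_sumr; apply: eq_bigr => k _; rewrite mxE mulrCA. Qed.
Lemma ipDl x y a : ip (x - y) a = ip x a - ip y a.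
Proof. by rewrite /ip -sumrB; apply: eq_bigr => k _; rewrite !mxE mulrBl. Qed.
Lemma ip_ev x (i : 'I_n) : ip x (ev i) = x 0 i.
Proof.
rewrite /ip (bigD1 i) //= big1 ?addr0; first by rewrite /ev mxE !eqxx mulr1.
by move=> k /negbTE ki; rewrite /ev mxE /= ki mulr0.
Qed.
Lemma sgnE (i : 'I_n) : sgn i = if odd i then -1 else 1.
Proof. by rewrite /sgn -signr_odd; case: (odd i); rewrite ?expr1 ?expr0. Qed.
Lemma evE (i k : 'I_n) : ev i 0 k = (k == i)%:R.
Proof. by rewrite /ev mxE. Qed.
Lemma wtE (m : 'I_n -> int) k : wt m 0 k = (m k)%:~R.
Proof. by rewrite mxE. Qed.

Lemma sum_sgn k : \sum_(i < k) (-1) ^+ i = (odd k)%:R :> rat.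
Proof.
elim: k => [|k IH]; first by rewrite big_ord0.
by rewrite big_ord_recr /= IH -signr_odd; case: (odd k) => /=; rewrite ?expr1 ?expr0; lra.
Qed.

Lemma inner_eq (i k : 'I_n) :
  \sum_(j <- [seq j <- enum 'I_n | (val i <= val j)%N]) (sgn i *: (ev i + ev j)) 0 k -
  \sum_(j <- [seq j <- enum 'I_n | (val i < val j)%N]) (sgn i *: (ev i - ev j)) 0 k
  = 2 * (sgn i * ((k == i)%:R + (i < k)%:R)).
Proof.
rewrite !big_filter !big_enum_cond /= (bigD1 i) ?leqnn //=.
rewrite (eq_bigl (fun j : 'I_n => (i < j)%N)); last first.
  by move=> j /=; rewrite ltn_neqAle eq_sym; case: (i <= j)%N; rewrite ?andbT ?andbF.
rewrite -addrA -sumrB.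
rewrite (eq_bigr (fun j : 'I_n => 2 * sgn i * (k == j)%:R)); last first.
  by move=> j _; rewrite !mxE /=; ring.
rewrite -big_distrr /= !mxE /=.
have -> : \sum_(j < n | (i < j)%N) ((k == j)%:R : rat) = (i < k)%:R.
  case: (ltnP i k) => ik.
    rewrite (bigD1 k) //= eqxx big1 ?addr0 //.
    by move=> j /andP[_ /negbTE]; rewrite eq_sym => ->.
  by rewrite big1 // => j ij; case: eqP => // kj; subst; rewrite ltnNge ik in ij.
ring.
Qed.

Lemma rhoE k : (rho_nc n - rho_c n) 0 k = (~~ odd k)%:R.
Proof.
rewrite /rho_nc /rho_c !mxE !summxE /Dnc /Dc !big_allpairs_dep /= -mulrBr -sumrB.
rewrite (eq_bigr _ (fun i _ => inner_eq i k)) -mulr_sumr mulrA mulVf // mul1r.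
rewrite big_enum /=.
rewrite (eq_bigr (fun i : 'I_n => sgn i * (k==i)%:R + sgn i * (i<k)%:R)); last by move=> i _; rewrite mulrDr.
rewrite big_split /= (bigD1 k) //= eqxx mulr1 big1 ?addr0; last first.
  by move=> j /negbTE; rewrite eq_sym => ->; rewrite mulr0.
have -> : \sum_(i in 'I_n) sgn i * (i < k)%:R = \sum_(i < k) (-1) ^+ i :> rat.
  rewrite (big_ord_widen n (fun i => (-1) ^+ i : rat) (ltnW (ltn_ord k))) [RHS]big_mkcond /=.
  by apply: eq_big => // i _; rewrite /sgn; case: (i < k)%N; rewrite ?mulr1 ?mulr0.
rewrite sum_sgn /sgn -signr_odd; case: (odd k); rewrite /= ?expr1 ?expr0; lra.
Qed.


Lemma ipDc x (i j : 'I_n) : ip x (sgn i *: (ev i - ev j)) = sgn i * (x 0 i - x 0 j).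
Proof. by rewrite ipZ ipD ipN !ip_ev. Qed.

Lemma Dc_mem (i j : 'I_n) : (i < j)%N -> sgn i *: (ev i - ev j) \in Dc n.
Proof.
move=> ij; apply/allpairsPdep; exists i, j; split=> //.
  by rewrite mem_enum.
by rewrite mem_filter ij mem_enum.
Qed.

Lemma Dc_inv a : a \in Dc n -> exists i j : 'I_n, (i < j)%N /\ a = sgn i *: (ev i - ev j).
Proof.
case/allpairsPdep => i [j [_ ]]; rewrite mem_filter => /andP[ij _] ->.
by exists i, j.
Qed.

Lemma Dnc1_mem (i j : 'I_n) : ~~ odd i -> (i <= j)%N -> ev i + ev j \in Dnc1 n.
Proof.
move=> oi ij; apply/allpairsPdep; exists i, j; split=> //.
  by rewrite mem_filter oi mem_enum.
by rewrite mem_filter ij mem_enum.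
Qed.

Lemma Dnc2_mem (i j : 'I_n) : odd i -> (i <= j)%N -> - ev i - ev j \in Dnc2 n.
Proof.
move=> oi ij; apply/allpairsPdep; exists i, j; split=> //.
  by rewrite mem_filter oi mem_enum.
by rewrite mem_filter ij mem_enum.
Qed.

Lemma tail_pair (par : bool) (p q : nat) : (q < n)%N -> (n <= q + 2)%N -> (p + 2 = q)%N ->
  odd q = par ->
  [/\ forall k : nat, ((k == p) + (k == q) <= 1)%N,
      forall k : nat, odd k != par -> ((k == p) + (k == q) = 0)%N
    & forall i j : nat, (i < j)%N -> (j < n)%N -> odd i = par -> odd j = par ->
        ((i == p) + (i == q) <= (j == p) + (j == q))%N].
Proof.
move=> qn nq pq oq; split.
- by move=> k; case: eqP; case: eqP => //=; lia.
- move=> k ok; case: eqP => [kp|_]; case: eqP => [kq|_] //=; try lia;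
  move: ok oq; case: par => /=; rewrite ?negbK; lia.
- move=> i j ij jn oi oj; case: (eqP (x := i)) => [ip|]; case: (eqP (x := i)) => [iq|] /=;
  case: (eqP (x := j)) => [jp|]; case: (eqP (x := j)) => [jq|] //=; try lia;
  move: oi oj oq; case: par; lia.
Qed.

Lemma ex_q (par : bool) : (4 <= n)%N -> exists q, [/\ (q < n)%N, (n <= q + 2)%N & odd q = par].
Proof.
move=> n4; case E: (odd n.-1 == par).
  by exists n.-1; split; [lia|lia|apply/eqP].
exists n.-2; split; [lia|lia|].
move: E; have -> : n.-1 = n.-2.+1 by lia.
by rewrite /=; case: par; case: (odd n.-2).
Qed.
End H.

Unset Implicit Arguments. Set Strict Implicit.

Theorem proposition6p7 (n : nat) (hn : (4 <= n)%N) :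
  ~ exists (mu0 lam0 : 'I_n -> int),
      [/\ wt mu0 + wt lam0 = rho_nc n - rho_c n,
          (forall a, a \in Dc n -> 0 <= ip (wt mu0) a /\ 0 <= ip (wt lam0) a),
          (forall b, b \in Dnc1 n -> exists2 a, a \in Dc n & ip (wt mu0 - b) a < 0)
        & (forall g, g \in Dnc2 n -> exists2 a, a \in Dc n & ip (wt lam0 - g) a < 0)].
Proof.
case=> mu [lam [H1 H2 H3 H4]].
pose M (k : 'I_n) : rat := (mu k)%:~R.
pose L (k : 'I_n) : rat := (lam k)%:~R.
have HS k : L k = (~~ odd k)%:R - M k.
  have := congr1 (fun A : 'rV[rat]_n => A 0 k) H1; rewrite /= rhoE !mxE => <-; rewrite /M /L; ring.
have HD (k l : 'I_n) : (k < l)%N -> 0 <= sgn k * (M k - M l) /\ 0 <= sgn k * (L k - L l).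
  by move=> kl; have := H2 _ (Dc_mem kl); rewrite !ipDc !wtE.
have Hsame (k l : 'I_n) : odd k = odd l -> M k = M l.
  move=> E; case: (ltngtP k l) => [kl|lk|kl].
  - have [A B] := HD _ _ kl; move: A B; rewrite !HS sgnE -E.
    by case: (odd k) => /=; lra.
  - have [A B] := HD _ _ lk; move: A B; rewrite !HS sgnE E.
    by case: (odd l) => /=; lra.
  - by have -> : k = l by apply: val_inj.
have Hmix (k l : 'I_n) : ~~ odd k -> odd l -> 0 <= M k - M l <= 1.
  move=> ok ol; case: (ltngtP k l) => [kl|lk|kl].
  - have [A B] := HD _ _ kl; move: A B; rewrite !HS sgnE (negbTE ok) ol /=.
    move=> A B; apply/andP; split; lra.
  - have [A B] := HD _ _ lk; move: A B; rewrite !HS sgnE (negbTE ok) ol /=.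
    move=> A B; apply/andP; split; lra.
  - by move: ok ol; rewrite kl => /negbTE ->.
have n0 : (0 < n)%N by lia.
have n1 : (1 < n)%N by lia.
pose o0 : 'I_n := Ordinal n0.
pose o1 : 'I_n := Ordinal n1.
have HM (k : 'I_n) : M k = if odd k then M o1 else M o0.
  case E: (odd k); apply: Hsame; by rewrite E.
have Hab := Hmix o0 o1 isT isT.
have Hint : (mu o0 - mu o1 = 0 \/ mu o0 - mu o1 = 1)%R.
  move: Hab; rewrite /M -intrB ler0z lerz1; lia.
have q2 q : (n <= q + 2)%N -> (q - 2 + 2 = q)%N by lia.
case: Hint => Hd.
-
  have [q [qn nq oq]] := ex_q true hn.
  have pn : (q - 2 < n)%N by lia.
  pose P : 'I_n := Ordinal pn.
  pose Q : 'I_n := Ordinal qn.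
  have [TA TB TC] := tail_pair qn nq (q2 q nq) oq.
  pose bb (k : 'I_n) : rat := (k == P)%:R + (k == Q)%:R.
  have bnd (k : 'I_n) : 0 <= bb k <= 1.
    by rewrite /bb -natrD ler0n /= (ler_nat _ _ 1) TA.
  have zer (k : 'I_n) : ~~ odd k -> bb k = 0.
    by move=> ok; rewrite /bb -natrD TB //; case: (odd k) ok.
  have mono (i j : 'I_n) : (i < j)%N -> odd i -> odd j -> bb i <= bb j.
    by move=> ij oi oj; rewrite /bb -!natrD ler_nat; apply: TC => //; apply: ltn_ord.
  have oP : odd P by rewrite /=; move: oq; lia.
  have [al alD Hlt] := H4 _ (Dnc2_mem (i := P) (j := Q) oP (leq_subr _ _)).
  have [i [j [ij Ea]]] := Dc_inv alD; subst al.
  have E (k : 'I_n) : (wt lam - (- ev P - ev Q)) 0 k = L k + bb k by rewrite !mxE /L /bb; ring.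
  move: Hlt; rewrite ipDc !E !HS (HM i) (HM j) sgnE.
  have Hab0 : M o0 = M o1 by apply/eqP; rewrite -subr_eq0 /M -intrB Hd.
  move: (bnd i) (bnd j) => /andP[bi1 bi2] /andP[bj1 bj2].
  case Oi: (odd i); case Oj: (odd j) => /=.
  + have := mono i j ij Oi Oj; lra.
  + rewrite (zer j) ?Oj //; lra.
  + rewrite (zer i) ?Oi //; lra.
  + rewrite (zer i) ?Oi // (zer j) ?Oj //; lra.
- have [q [qn nq oq]] := ex_q false hn.
  have pn : (q - 2 < n)%N by lia.
  pose P : 'I_n := Ordinal pn.
  pose Q : 'I_n := Ordinal qn.
  have [TA TB TC] := tail_pair qn nq (q2 q nq) oq.
  pose bb (k : 'I_n) : rat := (k == P)%:R + (k == Q)%:R.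
  have bnd (k : 'I_n) : 0 <= bb k <= 1.
    by rewrite /bb -natrD ler0n /= (ler_nat _ _ 1) TA.
  have zer (k : 'I_n) : odd k -> bb k = 0.
    by move=> ok; rewrite /bb -natrD TB //; case: (odd k) ok.
  have mono (i j : 'I_n) : (i < j)%N -> ~~ odd i -> ~~ odd j -> bb i <= bb j.
    by move=> ij oi oj; rewrite /bb -!natrD ler_nat; apply: TC => //; [apply: ltn_ord|apply: negbTE oi|apply: negbTE oj].
  have oP : ~~ odd P by rewrite /=; move: oq; lia.
  have [al alD Hlt] := H3 _ (Dnc1_mem (i := P) (j := Q) oP (leq_subr _ _)).
  have [i [j [ij Ea]]] := Dc_inv alD; subst al.
  have E (k : 'I_n) : (wt mu - (ev P + ev Q)) 0 k = M k - bb k by rewrite !mxE /M /bb; ring.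
  move: Hlt; rewrite ipDc !E (HM i) (HM j) sgnE.
  have H01 : M o0 - M o1 = 1 by rewrite /M -intrB Hd.
  have Hab1 : M o0 = M o1 + 1 by lra.
  move: (bnd i) (bnd j) => /andP[bi1 bi2] /andP[bj1 bj2].
  case Oi: (odd i); case Oj: (odd j) => /=.
  + rewrite (zer i) ?Oi // (zer j) ?Oj //; lra.
  + rewrite (zer i) ?Oi //; lra.
  + rewrite (zer j) ?Oj //; lra.
  + have := mono i j ij; rewrite Oi Oj => /(_ isT isT); lra.
Qed.
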